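(* Let $G$ be a strongly connected directed co-graph with co-tree $T$ and let $\hat{w}$ be an inner node of $T$. Then there is no vertex $w\in V(G)\setminus V(G_{\hat{w}})$ that resolves two vertices of $V(G_{\hat{w}})$ in $G$.
   Context: All graphs are finite and simple. For vertices $u,v$ of a directed graph $G$, $d_G(u,v)$ is the length of a shortest directed path from $u$ to $v$ (undefined if none exists); $G$ is strongly connected if directed paths exist in both directions between any two vertices. A vertex $w$ resolves two distinct vertices $u,v$ in $G$ if $w=u$, or $w=v$, or there are paths from $w$ to $u$ and from $w$ to $v$ with $d_G(w,u)\neq d_G(w,v)$. Directed co-graphs and their co-trees are defined recursively: a single vertex $u$ is a directed co-graph whose co-tree is a single node (a leaf) associated with $u$. If $G_1,G_2$ are directed co-graphs on disjoint vertex sets with co-trees $T_1,T_2$ (roots $\hat{l},\hat{r}$), then the disjoint union $G_1\cup G_2$ (edge set $E(G_1)\cup E(G_2)$), the join $G_1\times G_2$ (additionally all edges $(u,v),(v,u)$ with $u\in V(G_1),v\in V(G_2)$) and the directed join $G_1\gg G_2$ (additionally all edges $(u,v)$ with $u\in V(G_1),v\in V(G_2)$), each on vertex set $V(G_1)\cup V(G_2)$, are directed co-graphs; the co-tree is obtained from $T_1,T_2$ by adding a new root labelled $\cup$, $\times$ or $\gg$ respectively, with left successor $\hat{l}$ and right successor $\hat{r}$. Non-leaf nodes are inner nodes. For a node $\hat{w}$ of $T$, $G_{\hat{w}}$ denotes the subgraph of $G$ induced by the vertices associated with the leaves of the subtree of $T$ rooted at $\hat{w}$. *)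

(* Defs.v *)
From mathcomp Require Import all_boot.
Set Implicit Arguments. Unset Strict Implicit. Unset Printing Implicit Defensive.

Inductive cotree (V : Type) : Type :=
| Leaf of V
| UnionN of cotree V & cotree V
| JoinN of cotree V & cotree V
| DJoinN of cotree V & cotree V.

Arguments Leaf {V}. Arguments UnionN {V}. Arguments JoinN {V}. Arguments DJoinN {V}.

Section Cograph.
Variable V : eqType.

(* vertex set of the co-graph (vertices associated with the leaves) *)
Fixpoint leaves (t : cotree V) : seq V :=
  match t with
  | Leaf u => [:: u]
  | UnionN l r | JoinN l r | DJoinN l r => leaves l ++ leaves r
  end.

(* well-formedness: the vertex sets combined at each node are disjoint *)
Definition wf_cotree (t : cotree V) : bool := uniq (leaves t).

Fixpoint edge (t : cotree V) : rel V :=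
  match t with
  | Leaf _ => fun _ _ => false
  | UnionN l r => fun x y => edge l x y || edge r x y
  | JoinN l r => fun x y =>
      [|| edge l x y, edge r x y,
          (x \in leaves l) && (y \in leaves r)
        | (x \in leaves r) && (y \in leaves l)]
  | DJoinN l r => fun x y =>
      [|| edge l x y, edge r x y | (x \in leaves l) && (y \in leaves r)]
  end.

(* a directed walk x = x0 -> x1 -> ... -> xk = y; its length is size p *)
Definition dwalk (t : cotree V) (x y : V) (p : seq V) : bool :=
  path (edge t) x p && (last x p == y).

Definition reachable (t : cotree V) (x y : V) : Prop :=
  exists p, dwalk t x y p.

Definition is_dist (t : cotree V) (x y : V) (n : nat) : Prop :=
  (exists p, dwalk t x y p /\ size p = n) /\
  (forall p, dwalk t x y p -> n <= size p).

Definition strongly_connected (t : cotree V) : Prop :=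
  forall x y, x \in leaves t -> y \in leaves t -> reachable t x y.

Definition resolves (t : cotree V) (w u v : V) : Prop :=
  w = u \/ w = v \/
  exists du dv, [/\ is_dist t w u du, is_dist t w v dv & du <> dv].

(* s is (the subtree rooted at) a node of the co-tree t *)
Inductive subtree (s : cotree V) : cotree V -> Prop :=
| sub_refl : subtree s s
| sub_UL l r : subtree s l -> subtree s (UnionN l r)
| sub_UR l r : subtree s r -> subtree s (UnionN l r)
| sub_JL l r : subtree s l -> subtree s (JoinN l r)
| sub_JR l r : subtree s r -> subtree s (JoinN l r)
| sub_DL l r : subtree s l -> subtree s (DJoinN l r)
| sub_DR l r : subtree s r -> subtree s (DJoinN l r).

Definition inner (s : cotree V) : Prop :=
  match s with Leaf _ => False | _ => True end.

End Cograph.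

(* Main.v *)
Require Import Defs.
From mathcomp Require Import all_boot.

Set Implicit Arguments.
Section L.
Variable V : eqType.

Lemma edge_in (t : cotree V) x y : edge t x y -> y \in leaves t.
Proof.
elim: t x y => [a|l IHl r IHr|l IHl r IHr|l IHl r IHr] x y //=; rewrite mem_cat.
- by case/orP => [/IHl ->|/IHr ->]; rewrite ?orbT.
- case/or4P => [/IHl ->|/IHr ->|/andP[_ ->]|/andP[_ ->]]; by rewrite ?orbT.
- case/or3P => [/IHl ->|/IHr ->|/andP[_ ->]]; by rewrite ?orbT.
Qed.

Lemma edge_src (t : cotree V) x y : edge t x y -> x \in leaves t.
Proof.
elim: t x y => [a|l IHl r IHr|l IHl r IHr|l IHl r IHr] x y //=; rewrite mem_cat.
- by case/orP => [/IHl ->|/IHr ->]; rewrite ?orbT.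
- case/or4P => [/IHl ->|/IHr ->|/andP[-> _]|/andP[-> _]]; by rewrite ?orbT.
- case/or3P => [/IHl ->|/IHr ->|/andP[-> _]]; by rewrite ?orbT.
Qed.

Lemma sub_leaves (s t : cotree V) : subtree s t -> {subset leaves s <= leaves t}.
Proof.
elim => //= l r _ IH y /IH; rewrite mem_cat => ->; by rewrite ?orbT.
Qed.

Lemma module_edge (s t : cotree V) : subtree s t -> uniq (leaves t) ->
  forall x u v, x \notin leaves s -> u \in leaves s -> v \in leaves s ->
  edge t x u = edge t x v.
Proof.
elim => [|l r Hs IH|l r Hs IH|l r Hs IH|l r Hs IH|l r Hs IH|l r Hs IH] Hu x u v Hx Hu' Hv'.
- have F : forall y, edge s x y = false by move=> y; apply/negP => /edge_src; apply/negP.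
  by rewrite !F.
all: move: Hu => /=; rewrite cat_uniq => /and3P[Ul Dis Ur].
all: have Su := sub_leaves Hs _ Hu'; have Sv := sub_leaves Hs _ Hv'.
all: try (have Nu : u \notin leaves l by apply: (hasPn Dis)).
all: try (have Nv : v \notin leaves l by apply: (hasPn Dis)).
all: try (have Nu : u \notin leaves r by apply/negP => H; move/hasP: Dis; apply; exists u).
all: try (have Nv : v \notin leaves r by apply/negP => H; move/hasP: Dis; apply; exists v).
all: try (have Eu : edge r x u = false by apply/negP => /edge_in; apply/negP).
all: try (have Ev : edge r x v = false by apply/negP => /edge_in; apply/negP).
all: try (have Eu : edge l x u = false by apply/negP => /edge_in; apply/negP).
all: try (have Ev : edge l x v = false by apply/negP => /edge_in; apply/negP).
all: rewrite /= ?Eu ?Ev ?Su ?Sv ?(negbTE Nu) ?(negbTE Nv) ?(IH Ul x u v) ?(IH Ur x u v) //.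
Qed.
End L.

Theorem lemma1 (V : eqType) (t s : cotree V) :
  wf_cotree t -> strongly_connected t ->
  subtree s t -> inner s ->
  ~ (exists w u v,
       [/\ w \in leaves t, w \notin leaves s,
           u \in leaves s, v \in leaves s & u != v] /\ resolves t w u v).
Proof.
move=> wf _ Hs _ [w [u [v [[_ Hw Hu Hv _] R]]]].
have key : forall a b p, b \in leaves s -> a \notin leaves s -> dwalk t a b p ->
   forall c, c \in leaves s -> exists q, dwalk t a c q /\ size q <= size p.
  move=> a b p Hb; elim: p a => [|y p IH] a Ha.
    by rewrite /dwalk /= => /eqP E; rewrite E Hb in Ha.
  rewrite /dwalk /= => /andP[/andP[Ey Pp] La] c Hc.
  case Hy: (y \in leaves s).
    exists [:: c]; split => //; rewrite /dwalk /= eqxx !andbT.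
    by rewrite -(module_edge Hs wf _ _ _ Ha Hy Hc).
  have [q [Dq Sq]] := IH y (negbT Hy) (introT andP (conj Pp La)) c Hc.
  exists (y :: q); split => //; move: Dq; rewrite /dwalk /= Ey => /andP[-> ->].
  done.
case: R => [E|[E|[du [dv [[[p1 [D1 S1]] M1] [[p2 [D2 S2]] M2] Ne]]]]].
- by rewrite E Hu in Hw.
- by rewrite E Hv in Hw.
apply: Ne; apply/eqP; rewrite eqn_leq.
have [q1 [Q1 Z1]] := key _ _ _ Hv Hw D2 u Hu.
have [q2 [Q2 Z2]] := key _ _ _ Hu Hw D1 v Hv.
apply/andP; split.
  by apply: (leq_trans (M1 _ Q1)); rewrite -S2.
by apply: (leq_trans (M2 _ Q2)); rewrite -S1.
Qed.
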